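(* Let $\langle T,\le\rangle$ be a temporal flow and $v$ a temporal assignment over variables on $T$ (extended to formulas pointwise as in the context). Then for every formula $\varphi$, the function $v(\varphi,\cdot)$ is admissible and $s^v(\varphi)=d(v(\varphi,\cdot))$.
   Context: A temporal flow is a totally ordered infinite set $\langle T,\le\rangle$. On $\{0,\frac12,1\}$ put $\neg_3x=1-x$, $x\to_3y=\min(1,1-x+y)$. A function $f:T\to\{0,\frac12,1\}$ is admissible if it is constant, or there exist $i\in\{0,1\}$ and $t\in T$ (not the minimum of $T$, if $T$ has one) with $f(t')=i$ for all $t'\ge t$ and $f(t'')=\frac12$ for all $t''<t$. Let $T'=T\cup\{-\infty\}$; for admissible $f$ define $d(f)=\langle-\infty,c\rangle$ if $f$ is constant with value $c$, and $d(f)=\langle t,i\rangle$ in the second case. Let $T''=(T'\times\{0,1\})\cup\{\langle-\infty,\frac12\rangle\}$, totally ordered by: for $t<t'$ in $T$, $\langle-\infty,0\rangle<\langle t,0\rangle<\langle t',0\rangle<\langle-\infty,\frac12\rangle<\langle t',1\rangle<\langle t,1\rangle<\langle-\infty,1\rangle$. Formulas are built from variables and $\bot$ using $\neg$ and $\to$. A temporal assignment over variables is $v:VAR\times T\to\{0,\frac12,1\}$ with each $v(x,\cdot)$ admissible; it is extended to formulas by $v(\bot,t)=0$, $v(\neg\psi,t)=\neg_3v(\psi,t)$, and $v(\psi\to\chi,t)=v(\psi,t)\to_3v(\chi,t)$ if this equals $v(\psi,t')\to_3v(\chi,t')$ for every $t'\ge t$, and $\frac12$ otherwise. The map $s^v$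 from formulas to $T''$: $s^v(x)=d(v(x,\cdot))$; $s^v(\bot)=\langle-\infty,0\rangle$; if $s^v(\varphi)=\langle a,m\rangle$ then $s^v(\neg\varphi)=\langle a,1-m\rangle$; $s^v(\varphi\to\psi)=\langle-\infty,1\rangle$ if $s^v(\varphi)\le s^v(\psi)$ in $T''$, otherwise the maximum in $T''$ of $s^v(\neg\varphi)$ and $s^v(\psi)$. *)

(* Defs.v *)
From HB Require Import structures.
From mathcomp Require Import all_boot all_order.
From Stdlib Require Import ClassicalEpsilon ClassicalDescription.
Set Implicit Arguments. Unset Strict Implicit. Unset Printing Implicit Defensive.
Import Order.TTheory.
Local Open Scope order_scope.

Inductive val3 := V0 | Vh | V1.

(* value times 2, as a natural number *)
Definition v3nat (x : val3) : nat := match x with V0 => 0 | Vh => 1 | V1 => 2 end.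
Definition natv3 (n : nat) : val3 :=
  match n with 0 => V0 | 1 => Vh | _ => V1 end.

(* neg_3 x = 1 - x *)
Definition neg3 (x : val3) : val3 := natv3 (2 - v3nat x).
(* x ->_3 y = min(1, 1 - x + y) *)
Definition imp3 (x y : val3) : val3 := natv3 (minn 2 ((2 - v3nat x) + v3nat y)).

Definition infinite_type (T : eqType) : Prop := forall s : seq T, exists t, t \notin s.

Section Temporal.
Context {disp : Order.disp_t} {T : orderType disp}.

Definition admissible (f : T -> val3) : Prop :=
  (exists c, forall t, f t = c) \/
  (exists i t, (i = V0 \/ i = V1) /\ (exists t0, t0 < t) /\
     (forall t', t <= t' -> f t' = i) /\ (forall t'', t'' < t -> f t'' = Vh)).

(* T'' = (T' x {0,1}) u {<-oo,1/2>}, with T' = T u {-oo} encoded as option T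
   (None = -oo).  PZ a = <a,0>, PH = <-oo,1/2>, PO a = <a,1>. *)
Inductive Tpp := PZ of option T | PH | PO of option T.

Definition leT' (a b : option T) : bool :=
  match a, b with
  | None, _ => true
  | Some _, None => false
  | Some x, Some y => x <= y
  end.

Definition leTpp (p q : Tpp) : bool :=
  match p, q with
  | PZ a, PZ b => leT' a b
  | PZ _, _ => true
  | PH, PZ _ => false
  | PH, _ => true
  | PO _, PZ _ => false
  | PO _, PH => false
  | PO a, PO b => leT' b a
  end.

Definition maxTpp (p q : Tpp) : Tpp := if leTpp p q then q else p.

Definition negTpp (p : Tpp) : Tpp :=
  match p with PZ a => PO a | PH => PH | PO a => PZ a end.

(* the point <a,m> of T'' (m = 1/2 only used with a = -oo) *)
Definition pt (a : option T) (m : val3) : Tpp :=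
  match m with V0 => PZ a | Vh => PH | V1 => PO a end.

Definition d_spec (f : T -> val3) (p : Tpp) : Prop :=
  (exists c, (forall t, f t = c) /\ p = pt None c) \/
  (exists i t, (i = V0 \/ i = V1) /\ (exists t0, t0 < t) /\
     (forall t', t <= t' -> f t' = i) /\ (forall t'', t'' < t -> f t'' = Vh) /\
     p = pt (Some t) i).

(* d(f): the (unique, for admissible f) point satisfying d_spec *)
Definition dfun (f : T -> val3) : Tpp := epsilon (inhabits PH) (d_spec f).

Inductive form (VAR : Type) :=
  | FVar of VAR
  | FBot
  | FNeg of form VAR
  | FImp of form VAR & form VAR.

Arguments FBot {VAR}.

Fixpoint eval {VAR : Type} (v : VAR -> T -> val3) (phi : form VAR) (t : T) : val3 :=
  match phi with
  | FVar x => v x t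
  | FBot => V0
  | FNeg p => neg3 (eval v p t)
  | FImp p q =>
      let a := imp3 (eval v p t) (eval v q t) in
      if excluded_middle_informative
           (forall t', t <= t' -> imp3 (eval v p t') (eval v q t') = a)
      then a else Vh
  end.

Fixpoint sv {VAR : Type} (v : VAR -> T -> val3) (phi : form VAR) : Tpp :=
  match phi with
  | FVar x => dfun (v x)
  | FBot => PZ None
  | FNeg p => negTpp (sv v p)
  | FImp p q =>
      if leTpp (sv v p) (sv v q) then PO None
      else maxTpp (negTpp (sv v p)) (sv v q)
  end.

End Temporal.

(* Main.v *)
Require Import Defs.
From mathcomp Require Import all_boot all_order.
From Stdlib Require Import ClassicalEpsilon ClassicalDescription.
Import Order.TTheory.
Local Open Scope order_scope.

Lemma imp3E : (imp3 V0 V0 = V1) * (imp3 V0 Vh = V1) * (imp3 V0 V1 = V1) *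
  (imp3 Vh V0 = Vh) * (imp3 Vh Vh = V1) * (imp3 Vh V1 = V1) *
  (imp3 V1 V0 = V0) * (imp3 V1 Vh = Vh) * (imp3 V1 V1 = V1).
Proof. by []. Qed.
Lemma neg3E : (neg3 V0 = V1) * (neg3 Vh = Vh) * (neg3 V1 = V0).
Proof. by []. Qed.

Section S.
Context {disp : Order.disp_t} {T : orderType disp}.

Definition val (p : Tpp (T:=T)) (s : T) : val3 :=
  match p with
  | PZ None => V0 | PZ (Some a) => if s < a then Vh else V0
  | PH => Vh
  | PO None => V1 | PO (Some a) => if s < a then Vh else V1 end.

Definition good (p : Tpp (T:=T)) : Prop :=
  match p with PZ (Some a) | PO (Some a) => exists t0, t0 < a | _ => True end.

Ltac saturate := repeat match goal with
 | H : is_true (?x < ?y) |- _ =>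
   lazymatch goal with _ : is_true (x <= y) |- _ => fail | _ => have := ltW H; let Hn := fresh "Hs" in move=> Hn end
 | H1 : is_true (?x <= ?y), H2 : is_true (?y <= ?z) |- _ =>
   lazymatch goal with _ : is_true (x <= z) |- _ => fail | _ => have := le_trans H1 H2; let Hn := fresh "Hs" in move=> Hn end
 | H1 : is_true (?x < ?y), H2 : is_true (?y <= ?z) |- _ =>
   lazymatch goal with _ : is_true (x < z) |- _ => fail | _ => have := lt_le_trans H1 H2; let Hn := fresh "Hs" in move=> Hn end
 | H1 : is_true (?x <= ?y), H2 : is_true (?y < ?z) |- _ =>
   lazymatch goal with _ : is_true (x < z) |- _ => fail | _ => have := le_lt_trans H1 H2; let Hn := fresh "Hs" in move=> Hn end
 end.

Ltac contra := exfalso; saturate; match goal with H : is_true (?x < ?x) |- _ => by rewrite ltxx in H end.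

Ltac splitall := repeat match goal with
 | |- context [?x < ?x] => rewrite ltxx
 | |- context [?x <= ?x] => rewrite lexx
 | |- context [?x < ?y] => let Hn := fresh "Hc" in case: (ltP x y) => Hn
 | |- context [?x <= ?y] => let Hn := fresh "Hc" in case: (leP x y) => Hn
 end.

Ltac fin := intros; (repeat match goal with H : is_true true -> _ |- _ => specialize (H isT) end); (repeat match goal with H : context [imp3 _ _] |- _ => rewrite !imp3E in H end);
  rewrite ?imp3E; try discriminate; try done.

Lemma val_neg p s : val (negTpp p) s = neg3 (val p s).
Proof. by case: p => [[a|]| |[a|]] //=; case: ifP. Qed.

Lemma good_neg p : good p -> good (negTpp p).
Proof. by case: p => [[a|]| |[a|]]. Qed.

Lemma imp_core (p q : Tpp (T:=T)) t :
  let h := fun s => imp3 (val p s) (val q s) in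
  let r := if leTpp p q then PO None else maxTpp (negTpp p) q in
  ((forall t', t <= t' -> h t' = h t) -> h t = val r t) /\
  (~ (forall t', t <= t' -> h t' = h t) -> Vh = val r t).
Proof.
move=> h r; rewrite {}/h {}/r; split => H.
- case: p H => [[a|]| |[a|]]; case: q => [[b|]| |[b|]] H;
  rewrite /maxTpp /=; try move: (H a); try move: (H b); rewrite /val /=; splitall; simpl; fin; contra.
- case: p H => [[a|]| |[a|]]; case: q => [[b|]| |[b|]] H;
  rewrite /maxTpp /val /=; splitall; simpl; fin; first [contra | (exfalso; apply: H => t' tt'; rewrite /val /=; splitall; simpl; fin; contra)].
Qed.

Lemma dspec_val (f : T -> val3) p : d_spec f p <-> good p /\ (forall t, f t = val p t).
Proof.
split.
- case=> [[c [Hc ->]]|[i [a [Hi [Ht0 [H1 [H2 ->]]]]]]].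
    by case: c Hc => Hc; split => // t; rewrite Hc.
  case: Hi => ?; subst i; (split; [by [] | move=> s]); rewrite /=; (case: (ltP s a) => h; first [exact: H1 h | exact: H2 h]).

- case: p => [[a|]| |[a|]] /= [G E].
  + right; exists V0, a; do !split => //; [left=> // | move=> s h | move=> s h];
      rewrite E /=; [by rewrite ltNge h | by rewrite h].
  + by left; exists V0.
  + by left; exists Vh.
  + right; exists V1, a; do !split => //; [right=> // | move=> s h | move=> s h];
      rewrite E /=; [by rewrite ltNge h | by rewrite h].
  + by left; exists V1.
Qed.

Lemma val_uniq (tt : T) p q : good p -> good q -> (forall t, val p t = val q t) -> p = q.
Proof.
case: p => [[a|]| |[a|]]; case: q => [[b|]| |[b|]] //= Gp Gq E;
 try case: Gp => t0 h0; try case: Gq => t1 h1;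
 try (case: (ltgtP a b) => [hab|hab|->]; [| |done]);
 try move: (E a); try move: (E b); try move: (E t0); try move: (E t1);
 try move: (E tt); splitall; fin; contra.
Qed.

Lemma adm_dspec (f : T -> val3) : admissible f -> exists p, d_spec f p.
Proof.
case=> [[c Hc]|[i [a [Hi [Ht0 [H1 H2]]]]]].
- by exists (pt None c); left; exists c.
- by exists (pt (Some a) i); right; exists i, a.
Qed.

Lemma dspec_adm (f : T -> val3) p : d_spec f p -> admissible f.
Proof.
case=> [[c [Hc _]]|[i [a [Hi [Ht0 [H1 [H2 _]]]]]]].
- by left; exists c.
- by right; exists i, a.
Qed.

Lemma dfun_spec (f : T -> val3) : admissible f -> d_spec f (dfun f).
Proof.
move=> /adm_dspec [p Hp]; exact: (epsilon_spec (inhabits PH) (d_spec f) (ex_intro _ p Hp)).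
Qed.

Lemma main_ind VAR (v : VAR -> T -> val3) (hv : forall x, admissible (v x)) phi :
  good (sv v phi) /\ forall t, eval v phi t = val (sv v phi) t.
Proof.
elim: phi => [x||p [Gp IHp]|p [Gp IHp] q [Gq IHq]] /=.
- by apply/dspec_val; apply: dfun_spec.
- by [].
- by split; [apply: good_neg | move=> t; rewrite IHp val_neg].
- split.
    case: ifP => // _; rewrite /maxTpp; case: ifP => _ //; exact: good_neg.
  move=> t; have [C1 C2] := imp_core (sv v p) (sv v q) t.
  case: excluded_middle_informative => H /=.
    rewrite IHp IHq; apply: C1 => t' ht'; rewrite -!IHp -!IHq; exact: H t' ht'.
  apply: C2 => H'; apply: H => t' ht'; rewrite !IHp !IHq; exact: H' t' ht'.
Qed.
End S.

Theorem mainTheorem4 (disp : Order.disp_t) (T : orderType disp)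
  (Tinf : infinite_type T) (VAR : Type) (v : VAR -> T -> val3)
  (hv : forall x, admissible (v x)) (phi : form VAR) :
  admissible (eval v phi) /\ sv v phi = dfun (eval v phi).
Proof.
have [t0 _] := Tinf [::].
have [G E] := @main_ind _ T _ v hv phi.
have D : d_spec (eval v phi) (sv v phi) by apply/dspec_val.
have A := @dspec_adm _ _ _ _ D.
split => //.
have /dspec_val [G' E'] := @dfun_spec _ _ _ A.
apply: (val_uniq t0) => // t; by rewrite -E -E'.
Qed.
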